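(* Let $G$ be a connected weighted multigraph on the vertex set $V$, $|V|=n\ge 2$, with positive edge weights, weighted adjacency matrix $A$ and spectral radius $\rho=\rho(A)$. For $t\in(0,\rho^{-1})$ let $R_t=(I-tA)^{-1}=(r_{ij}(t))$ and $d_t(i,j)=\tfrac12\bigl(\ln r_{ii}(t)+\ln r_{jj}(t)\bigr)-\ln r_{ij}(t)$. Then for all distinct $i,j\in V$ and all $t\in(0,\rho^{-1})$, $$d_t(i,j)=-\tfrac12\ln\Bigl(\bigl(t^{-1}I-A_{jj}\bigr)^{-1}_i\,a_{\setminus j\,j}\;\bigl(t^{-1}I-A_{ii}\bigr)^{-1}_j\,a_{\setminus i\,i}\Bigr).$$
   Context: $G$ may have loops and multiple edges; $A=(a_{ij})$ has $a_{ij}$ equal to the sum of weights of the edges joining $i$ and $j$. All matrices are indexed by the vertices. For a matrix $M$ and vertex $j$, $M_{jj}$ is the submatrix obtained by deleting row $j$ and column $j$ (its rows and columns remain indexed by $V\setminus\{j\}$); for an invertible matrix $N$, $N^{-1}_i$ denotes the row of $N^{-1}$ indexed by vertex $i$; $a_{\setminus j\,j}$ is the $j$th column of $A$ with the entry $a_{jj}$ removed (a vector indexed by $V\setminus\{j\}$). *)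

(* Defs.v *)
From HB Require Import structures.
From mathcomp Require Import all_boot all_order all_algebra.
From mathcomp Require Import all_classical all_reals all_analysis.
Set Implicit Arguments. Unset Strict Implicit. Unset Printing Implicit Defensive.
Import Order.TTheory GRing.Theory Num.Theory.
Local Open Scope ring_scope.
Local Open Scope classical_set_scope.

(* A weighted multigraph on the vertex set 'I_n is given by a finite list of
   edges (u, v, w): an edge joining u and v (a loop if u = v) with weight w. *)
Definition edge_joins (n : nat) (R : Type) (e : 'I_n * 'I_n * R) (i j : 'I_n) : bool :=
  ((e.1.1 == i) && (e.1.2 == j)) || ((e.1.1 == j) && (e.1.2 == i)).

Definition wadj (R : numDomainType) (n : nat) (E : seq ('I_n * 'I_n * R)) : 'M[R]_n :=
  \matrix_(i, j) \sum_(e <- E | edge_joins e i j) e.2.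

Definition pos_weights (R : numDomainType) (n : nat) (E : seq ('I_n * 'I_n * R)) : Prop :=
  forall e, e \in E -> 0 < e.2.

Definition gadj (R : Type) (n : nat) (E : seq ('I_n * 'I_n * R)) : rel 'I_n :=
  fun i j => has (fun e => edge_joins e i j) E.

Definition gconnected (R : Type) (n : nat) (E : seq ('I_n * 'I_n * R)) : Prop :=
  forall i j : 'I_n, connect (gadj E) i j.

(* spectral radius: sup of |lambda| over the eigenvalues lambda of A
   (A is real symmetric here, so all its eigenvalues are real). *)
Definition spectral_radius (R : realType) (n : nat) (A : 'M[R]_n) : R :=
  sup [set `|l| | l in [set l : R | eigenvalue A l]].

Definition resolvent (R : realType) (n : nat) (A : 'M[R]_n) (t : R) : 'M[R]_n :=
  invmx (1%:M - t *: A).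

Definition dist_t (R : realType) (n : nat) (A : 'M[R]_n) (t : R) (i j : 'I_n) : R :=
  let Rt := resolvent A t in
  2^-1 * (ln (Rt i i) + ln (Rt j j)) - ln (Rt i j).

(* A_jj : A with row j and column j deleted; its index k : 'I_n.-1 stands for
   the vertex lift j k of V \ {j}. *)
Definition del_mx (R : Type) (n : nat) (A : 'M[R]_n) (j : 'I_n) : 'M[R]_n.-1 :=
  \matrix_(k, l) A (lift j k) (lift j l).

Definition del_col (R : Type) (n : nat) (A : 'M[R]_n) (j : 'I_n) : 'cV[R]_n.-1 :=
  \col_k A (lift j k) j.

(* Main.v *)
Require Import Defs.
From HB Require Import structures.
From mathcomp Require Import all_boot all_order all_algebra.
From mathcomp Require Import all_classical all_reals all_analysis.
From mathcomp Require Import ring lra.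
Import Order.TTheory GRing.Theory Num.Theory.
Local Open Scope ring_scope.
Local Open Scope classical_set_scope.
Section S.
Set Implicit Arguments. Unset Strict Implicit.
Variable R : realType.

Lemma zmono (m : nat) (M : 'M[R]_m) (x y : 'cV[R]_m) :
  (forall i j, i != j -> M i j <= 0) -> (forall i, 0 < x i 0) ->
  (forall i, 0 < (M *m x) i 0) -> (forall i, 0 <= (M *m y) i 0) ->
  forall i, 0 <= y i 0.
Proof.
move=> HZ Hx HMx HMy i; rewrite leNgt; apply/negP => yi.
pose f k := y k 0 / x k 0.
have [i0 _ Hmin] := @arg_minP _ _ _ i xpredT f isT.
set c := - f i0.
have fi : f i < 0 by rewrite /f ltr_pdivrMr // mul0r.
have cpos : 0 < c by rewrite /c oppr_gt0; exact: le_lt_trans (Hmin i isT) fi.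
pose z := y + c *: x.
have zge k : 0 <= z k 0.
  rewrite /z !mxE (_ : y k 0 = f k * x k 0); last by rewrite /f divfK ?gt_eqF.
  rewrite -mulrDl mulr_ge0 //; last exact: ltW (Hx k).
  by rewrite /c subr_ge0 (Hmin k isT).
have zi0 : z i0 0 = 0.
  rewrite /z !mxE /c /f mulNr divfK ?gt_eqF // subrr //.
have H1 : 0 < (M *m z) i0 0.
  have -> : (M *m z) i0 0 = (M *m y) i0 0 + c * (M *m x) i0 0.
    by rewrite /z mulmxDr -scalemxAr mxE; congr (_ + _); rewrite mxE.
  have := HMy i0; have := mulr_gt0 cpos (HMx i0); lra.
clearbody z.
have H2 : (M *m z) i0 0 <= 0.
  rewrite mxE; apply: sumr_le0 => k _.
  have [<-|nk] := eqVneq i0 k; first by rewrite zi0 mulr0.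
  by rewrite mulr_le0_ge0 // HZ.
by move: (lt_le_trans H1 H2); rewrite ltxx.
Qed.

Lemma zunit (m : nat) (M : 'M[R]_m) (x : 'cV[R]_m) :
  (forall i j, i != j -> M i j <= 0) -> (forall i, 0 < x i 0) ->
  (forall i, 0 < (M *m x) i 0) -> M \in unitmx.
Proof.
move=> HZ Hx HMx; apply/negPn/negP => nu.
have : kermx M^T != 0 by rewrite kermx_eq0 row_free_unit unitmx_tr.
case/rowV0Pn => v /sub_kermxP vM vn0.
have My : M *m v^T = 0 by rewrite -[M]trmxK -trmx_mul vM trmx0.
have h1 := @zmono m M x (v^T) HZ Hx HMx.
have h2 := @zmono m M x (- v^T) HZ Hx HMx.
move/eqP: vn0; apply; apply/matrixP => i j.
rewrite (ord1 i) !mxE; apply/eqP; rewrite eq_le.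
have := h1 _ j; have := h2 _ j; rewrite !mxE.
have -> : M *m - v^T = - (M *m v^T) by rewrite mulmxN.
rewrite My; move=> a b.
have a' : 0 <= - v 0 j by apply: a => k; rewrite !mxE oppr0.
have b' : 0 <= v 0 j by apply: b => k; rewrite !mxE.
by rewrite b' andbT -oppr_ge0.
Qed.

Lemma eig_bound (m : nat) (A : 'M[R]_m) l : eigenvalue A l ->
  `|l| <= \sum_i \sum_j `|A i j|.
Proof.
case/eigenvalueP => v vA vn0.
case: (pickP (fun k => v 0 k != 0)) => [k0 hk0|]; last first.
  move=> h; case/eqP: vn0; apply/matrixP => i j; rewrite (ord1 i) !mxE.
  by move: (h j) => /= /negbFE/eqP.
have [k _ Hmax] := @arg_maxP _ _ _ k0 xpredT (fun k => `|v 0 k|) isT.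
have vk : 0 < `|v 0 k|.
  by rewrite (lt_le_trans _ (Hmax k0 isT)) // normr_gt0.
have e : l * v 0 k = \sum_i v 0 i * A i k.
  by have := congr1 (fun M : 'rV[R]_m => M 0 k) vA; rewrite !mxE => <-.
have h1 : `|l| * `|v 0 k| <= `|v 0 k| * \sum_i `|A i k|.
  rewrite -normrM e mulr_sumr; apply: (le_trans (ler_norm_sum _ _ _)).
  apply: ler_sum => i _; rewrite normrM ler_wpM2r //; exact: Hmax.
have h2 : \sum_i `|A i k| <= \sum_i \sum_j `|A i j|.
  apply: ler_sum => i _; rewrite (bigD1 k) //= lerDl sumr_ge0 //.
have := ler_wpM2l (ltW vk) h2.
move: h1; rewrite mulrC => h1 h3.
by rewrite -(ler_pM2l vk) (le_trans h1 h3).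
Qed.

Lemma inv_res (m : nat) (A : 'M[R]_m) t s : 0 < t -> t < (spectral_radius A)^-1 ->
  0 <= s -> s <= t -> (1%:M - s *: A) \in unitmx.
Proof.
move=> t0 tr s0 st.
have [->|sn0] := eqVneq s 0; first by rewrite scale0r subr0 unitmx1.
have sp : 0 < s by rewrite lt_def sn0 s0.
apply/negPn/negP => nu.
have ev : eigenvalue A s^-1.
  rewrite /eigenvalue /eigenspace kermx_eq0 row_free_unit.
  have e : 1%:M - s *: A = (- s) *: (A - s^-1%:M).
    apply/matrixP => i j; rewrite !mxE; case: (i == j) => /=.
      by rewrite !mulr1n mulrBr mulNr mulNr mulfV // opprK addrC.
    by rewrite !mulr0n subr0 sub0r mulNr.
  by rewrite e unitmxZ ?unitfE ?oppr_eq0 // in nu.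
set E := [set `|l| | l in [set l : R | eigenvalue A l]].
have hE : has_sup E.
  split; first by exists `|s^-1|; exists s^-1.
  exists (\sum_i \sum_j `|A i j|) => _ [l hl <-]; exact: eig_bound.
have hs : `|s^-1| <= spectral_radius A.
  by apply: sup_upper_bound => //; exists s^-1.
move: hs tr; rewrite gtr0_norm ?invr_gt0 //; set r := spectral_radius A => hs tr.
have rp : 0 < r by apply: lt_le_trans hs; rewrite invr_gt0.
move: tr; rewrite -[r^-1]mul1r ltr_pdivlMr // => tr.
move: hs; rewrite -[s^-1]mul1r ler_pdivrMr // => hs.
have := ler_wpM2r (ltW rp) st.
lra.
Qed.

Lemma zmat (m : nat) (A : 'M[R]_m) s : (forall i j, 0 <= A i j) -> 0 <= s ->
  forall i j, i != j -> (1%:M - s *: A) i j <= 0.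
Proof.
move=> HA s0 i j nij; rewrite !mxE (negbTE nij) mulr0n sub0r oppr_le0.
exact: mulr_ge0.
Qed.

Lemma entry (m : nat) (A : 'M[R]_m) s (x : 'cV[R]_m) i :
  ((1%:M - s *: A) *m x) i 0 = x i 0 - s * (A *m x) i 0.
Proof.
rewrite mulmxBl mul1mx -scalemxAl [LHS]mxE; congr (_ + _).
by rewrite mxE [X in - X]mxE.
Qed.

Lemma Ax_ge0 (m : nat) (A : 'M[R]_m) (x : 'cV[R]_m) i :
  (forall i j, 0 <= A i j) -> (forall i, 0 <= x i 0) -> 0 <= (A *m x) i 0.
Proof. by move=> HA Hx; rewrite mxE sumr_ge0 // => j _; rewrite mulr_ge0. Qed.

Lemma small (e a C : R) : 0 <= e -> e < C^-1 -> `|a| <= C -> 0 < C ->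
  0 < 1 + e * a /\ 0 < 1 - e * a.
Proof.
move=> e0 eC aC C0.
have h1 : e * `|a| <= e * C by rewrite ler_wpM2l.
have h2 : e * C < 1 by rewrite -(mulVf (lt0r_neq0 C0)) ltr_pM2r.
have h3 : e * a <= e * `|a| by rewrite ler_wpM2l // ler_norm.
have h4 : - (e * a) <= e * `|a| by rewrite -mulrN ler_wpM2l // -normrN ler_norm.
split; lra.
Qed.

Lemma semipos (m : nat) (A : 'M[R]_m) t : (forall i j, 0 <= A i j) -> 0 < t ->
  t < (spectral_radius A)^-1 ->
  exists x : 'cV[R]_m, (forall i, 0 < x i 0) /\
     (forall i, 0 < ((1%:M - t *: A) *m x) i 0).
Proof.
move=> HA t0 tr.
pose Qs s := exists x : 'cV[R]_m, (forall i, 0 < x i 0) /\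
     (forall i, 0 < ((1%:M - s *: A) *m x) i 0).
pose S := [set s : R | (0 <= s <= t) /\ Qs s].
have S0 : S 0.
  split; first by rewrite lexx ltW.
  exists (const_mx 1); split => i; first by rewrite mxE ltr01.
  by rewrite scale0r subr0 mul1mx mxE ltr01.
have hS : has_sup S.
  by split; [exists 0 | exists t => s [/andP [_ ?] _]].
set ss := sup S.
have ss0 : 0 <= ss := sup_upper_bound hS S0.
have sst : ss <= t.
  by apply: ge_sup; [exists 0 | move=> s [/andP [_ ?] _]].
have U := inv_res t0 tr ss0 sst.
pose x : 'cV[R]_m := invmx (1%:M - ss *: A) *m const_mx 1.
have Mx i : ((1%:M - ss *: A) *m x) i 0 = 1.
  by rewrite /x mulmxA mulmxV // mul1mx mxE.
have key s' i : ((1%:M - s' *: A) *m x) i 0 = 1 + (ss - s') * (A *m x) i 0.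
  have := Mx i; rewrite !entry mulrBl => h; lra.
pose C := 1 + \sum_i `|(A *m x) i 0|.
have Cp : 0 < C by rewrite /C ltr_wpDr ?sumr_ge0.
have Cb i : `|(A *m x) i 0| <= C.
  rewrite /C (bigD1 i) //=.
  have := @sumr_ge0 _ _ (index_enum 'I_m) (fun j => j != i) (fun j => `|(A *m x) j 0|) (fun _ _ => normr_ge0 _).
  lra.
have Ci0 : 0 < C^-1 by rewrite invr_gt0.
have [s Ss hs] := @sup_adherent _ S C^-1 Ci0 hS.
have sss : s <= ss := sup_upper_bound hS Ss.
case: Ss => /andP [s0 st] [x0 [Hx0 HMx0]].
have Hv i : 0 < ((1%:M - s *: A) *m x) i 0.
  rewrite key; move: hs; rewrite -/ss => hs.
  have e1 : 0 <= ss - s by rewrite subr_ge0.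
  have e2 : ss - s < C^-1 by lra.
  by have [] := @small (ss - s) ((A *m x) i 0) C e1 e2 (Cb i) Cp.
have xge : forall i, 0 <= x i 0 :=
  zmono (zmat HA s0) Hx0 HMx0 (fun i => ltW (Hv i)).
have xpos i : 0 < x i 0.
  have := Hv i; rewrite entry; have := mulr_ge0 s0 (Ax_ge0 i HA xge); lra.
have sst' : ss = t.
  apply/eqP; rewrite eq_le sst /= leNgt; apply/negP => lt.
  pose s' := Order.min t (ss + C^-1 / 2).
  have h1 : s' <= ss + C^-1 / 2 by rewrite ge_min lexx orbT.
  have h2 : s' <= t by rewrite ge_min lexx.
  have Ci : 0 < C^-1 by rewrite invr_gt0.
  have h3 : ss < s' by rewrite lt_min lt ltrDl divr_gt0.
  have S' : S s'.
    split; first by rewrite h2 andbT; lra.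
    exists x; split => // i; rewrite key.
    have e1 : 0 <= s' - ss by lra.
    have e2 : s' - ss < C^-1 by lra.
    have [_] := @small (s' - ss) ((A *m x) i 0) C e1 e2 (Cb i) Cp; lra.
  have := sup_upper_bound hS S'; rewrite -/ss; lra.
by exists x; split => // i; rewrite -sst' Mx ltr01.
Qed.

Lemma mE (m : nat) (A : 'M[R]_m) t i j :
  (1%:M - t *: A) i j = (i == j)%:R - t * A i j.
Proof. by rewrite !mxE. Qed.

Lemma schur (m : nat) (A : 'M[R]_m) (t : R) (j : 'I_m) (N : 'M[R]_m) :
  t != 0 -> (1%:M - t *: A) *m N = 1%:M ->
  (t^-1%:M - del_mx A j) *m (\col_p N (lift j p) j) = N j j *: del_col A j.
Proof.
move=> tn0 H; apply/matrixP => p z; rewrite (ord1 z).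
have h := congr1 (fun M : 'M[R]_m => M (lift j p) j) H; rewrite /= !mxE in h.
rewrite (bigD1_ord j) //= in h.
move: h; rewrite mE eq_sym (negbTE (neq_lift j p)) /=.
set S := \sum_(i < m.-1) _ => h.
have e : ((t^-1%:M - del_mx A j) *m (\col_p N (lift j p) j)) p 0 = t^-1 * S.
  rewrite mxE /S mulr_sumr; apply: eq_bigr => q _; rewrite mE !mxE (inj_eq lift_inj).
  by case: (p == q) => /=; rewrite ?mulr1n ?mulr0n; field.
rewrite e; rewrite !mxE.
have -> : S = t * A (lift j p) j * N j j.
  by move: h; rewrite ?mulr0n; lra.
by field.
Qed.

Lemma delunit (m : nat) (A : 'M[R]_m) t (j : 'I_m) (x : 'cV[R]_m) :
  (forall i j, 0 <= A i j) -> 0 < t -> (forall i, 0 < x i 0) ->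
  (forall i, 0 < ((1%:M - t *: A) *m x) i 0) ->
  (t^-1%:M - del_mx A j) \in unitmx.
Proof.
move=> HA t0 Hx HMx.
apply: (@zunit _ _ (\col_p x (lift j p) 0)).
- move=> p q npq; rewrite !mxE (negbTE npq) mulr0n sub0r oppr_le0; exact: HA.
- by move=> p; rewrite mxE.
- move=> p; have := HMx (lift j p); rewrite entry mxE (bigD1_ord j) //=.
  have -> : ((t^-1%:M - del_mx A j) *m \col_p0 x (lift j p0) 0) p 0 =
     t^-1 * x (lift j p) 0 - \sum_(i < m.-1) A (lift j p) (lift j i) * x (lift j i) 0.
    rewrite mxE (bigD1 p) //= [in RHS](bigD1 p) //= !mxE eqxx mulr1n opprD addrA.
    congr (_ + _); first by rewrite mulrBl.
    rewrite -sumrN; apply: eq_bigr => q nq; rewrite !mxE eq_sym (negbTE nq) mulr0n sub0r.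
    by rewrite mulNr.
  set S := \sum_(i < m.-1) _ => h.
  have h2 := mulr_ge0 (HA (lift j p) j) (ltW (Hx j)).
  have e : t^-1 * x (lift j p) 0 - S = t^-1 * (x (lift j p) 0 - t * S).
    by field; rewrite gt_eqF.
  rewrite e mulr_gt0 ?invr_gt0 //.
  have := mulr_ge0 (ltW t0) h2; rewrite mulrDr in h; lra.
Qed.

Lemma Nnonneg (m : nat) (A : 'M[R]_m) t (x : 'cV[R]_m) (N : 'M[R]_m) :
  (forall i j, 0 <= A i j) -> 0 <= t -> (forall i, 0 < x i 0) ->
  (forall i, 0 < ((1%:M - t *: A) *m x) i 0) ->
  (1%:M - t *: A) *m N = 1%:M -> forall i k, 0 <= N i k.
Proof.
move=> HA t0 Hx HMx H i k.
have := @zmono _ _ x (col k N) (zmat HA t0) Hx HMx.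
move=> h; have := h _ i; rewrite mxE; apply => l.
by rewrite colE mulmxA H mul1mx mxE ler0n.
Qed.

Lemma NE (m : nat) (A : 'M[R]_m) t (N : 'M[R]_m) i k :
  (1%:M - t *: A) *m N = 1%:M ->
  N i k = (i == k)%:R + t * \sum_l A i l * N l k.
Proof.
move=> H; have := congr1 (fun M : 'M[R]_m => M i k) H.
rewrite /= mulmxBl mul1mx -scalemxAl [X in X = _ -> _]mxE [X in _ + X = _ -> _]mxE.
rewrite [X in _ - X = _ -> _]mxE [X in _ - _ * X = _ -> _]mxE mxE => <-.
by rewrite subrK.
Qed.

Lemma respos (m : nat) (A : 'M[R]_m) t (N : 'M[R]_m) (adj : rel 'I_m) :
  (forall i j, 0 <= A i j) -> 0 < t -> (forall i j, adj i j -> 0 < A j i) ->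
  (1%:M - t *: A) *m N = 1%:M -> (forall i k, 0 <= N i k) ->
  forall k i, connect adj k i -> 0 < N i k.
Proof.
move=> HA t0 Hadj H Hn k i /connectP [p pth ->] {i}.
have Ssum a : 0 <= \sum_l A a l * N l k.
  by apply: sumr_ge0 => l _; rewrite mulr_ge0.
have Pk : 0 < N k k.
  rewrite (NE _ _ H) eqxx /=; have := mulr_ge0 (ltW t0) (Ssum k); lra.
suff gen : forall a q, 0 < N a k -> path adj a q -> 0 < N (last a q) k.
  exact: gen.
move=> a q; elim: q a => [|b q IH] a Pa //= /andP [ab pth'].
apply: IH pth'; rewrite (NE _ _ H).
have : t * (A b a * N a k) <= t * \sum_l A b l * N l k.
  apply: ler_wpM2l; first exact: ltW t0.
  rewrite (bigD1 a) //= lerDl.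
  by apply: sumr_ge0 => l _; rewrite mulr_ge0.
have := mulr_gt0 t0 (mulr_gt0 (Hadj _ _ ab) Pa).
have : 0 <= ((b == k)%:R : R) by rewrite ler0n.
lra.
Qed.

Lemma ratio (m : nat) (K : 'M[R]_m) (w a : 'cV[R]_m) c :
  K \in unitmx -> c != 0 -> K *m w = c *: a -> invmx K *m a = c^-1 *: w.
Proof.
move=> U c0 h; rewrite -(scalerK c0 a) -h -scalemxAr mulmxA mulVmx //.
by rewrite mul1mx.
Qed.

Lemma edge_sym m (e : 'I_m * 'I_m * R) i j : edge_joins e i j = edge_joins e j i.
Proof. by rewrite /edge_joins orbC. Qed.

Lemma wadj_sym m (E : seq ('I_m * 'I_m * R)) i j : wadj E i j = wadj E j i.
Proof. by rewrite !mxE; apply: eq_bigl => e; exact: edge_sym. Qed.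

Lemma wadj_ge0 m (E : seq ('I_m * 'I_m * R)) : pos_weights E ->
  forall i j, 0 <= wadj E i j.
Proof.
move=> pw i j; rewrite mxE big_seq_cond; apply: sumr_ge0 => e /andP [eE _].
exact: ltW (pw e eE).
Qed.

Lemma sum_pos m (E : seq ('I_m * 'I_m * R)) (P : pred ('I_m * 'I_m * R)) :
  pos_weights E -> has P E -> 0 < \sum_(e <- E | P e) e.2.
Proof.
elim: E => [|e E IH] pw //= hP; rewrite big_cons.
have pw' : pos_weights E by move=> f fE; apply: pw; rewrite inE fE orbT.
have ge : 0 <= \sum_(e <- E | P e) e.2.
  rewrite big_seq_cond; apply: sumr_ge0 => f /andP [fE _]; exact: ltW (pw' f fE).
case: (boolP (P e)) hP => Pe /= hP.
  by have := pw e (mem_head _ _); lra.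
exact: IH.
Qed.

Lemma wadj_adj m (E : seq ('I_m * 'I_m * R)) : pos_weights E ->
  forall i j, gadj E i j -> 0 < wadj E j i.
Proof.
move=> pw i j h; rewrite wadj_sym mxE; exact: sum_pos.
Qed.

End S.

Local Close Scope classical_set_scope.

(* For distinct vertices i, j: k (resp. l) is the index of vertex i in
   V \ {j} (resp. of j in V \ {i}), i.e. lift j k = i, lift i l = j.
   (t^{-1}I - A_jj)^{-1}_i a_{\ j j} is the (k,0) entry of the product. *)
Theorem theorem2 (R : realType) (n : nat) (E : seq ('I_n * 'I_n * R)) :
  (2 <= n)%N -> pos_weights E -> gconnected E ->
  let A := wadj E in
  let rho := spectral_radius A in
  forall (i j : 'I_n), i != j ->
  forall (k : 'I_n.-1) (l : 'I_n.-1), lift j k = i -> lift i l = j ->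
  forall t : R, 0 < t -> t < rho^-1 ->
  dist_t A t i j =
    - 2^-1 * ln ((invmx (t^-1%:M - del_mx A j) *m del_col A j) k 0
                 * (invmx (t^-1%:M - del_mx A i) *m del_col A i) l 0).
Proof.
move=> n2 pw gc A rho i j nij k l hk hl t t0 tr.
have HA : forall a b, 0 <= A a b := wadj_ge0 pw.
have [x [Hx HMx]] := semipos HA t0 tr.
have U : (1%:M - t *: A) \in unitmx := zunit (zmat HA (ltW t0)) Hx HMx.
have HN : (1%:M - t *: A) *m resolvent A t = 1%:M by rewrite mulmxV.
set N := resolvent A t in HN *.
have Nge := Nnonneg HA (ltW t0) Hx HMx HN.
have Npos a b : 0 < N a b := respos HA t0 (wadj_adj pw) HN Nge (gc b a).
have MT : (1%:M - t *: A)^T = 1%:M - t *: A.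
  by apply/matrixP => a b; rewrite mxE !mE eq_sym /A wadj_sym.
have Nsym a b : N a b = N b a.
  by have := congr1 (fun X : 'M[R]_n => X a b) (trmx_inv (1%:M - t *: A));
     rewrite MT mxE /= => ->.
have form a (c : 'I_n.-1) : (invmx (t^-1%:M - del_mx A a) *m del_col A a) c 0
     = (N a a)^-1 * N (lift a c) a.
  rewrite (ratio (w := \col_p N (lift a p) a) (c := N a a)) ?mxE //.
  - exact: delunit HA t0 Hx HMx.
  - exact: lt0r_neq0.
  - by apply: schur => //; exact: lt0r_neq0.
rewrite !form hk hl (Nsym j i) /dist_t /= -/N.
have lnM' u v : 0 < u -> 0 < v -> ln (u * v) = ln u + ln v.
  by move=> ? ?; rewrite lnM ?posrE.
have lnV' u : 0 < u -> ln u^-1 = - ln u.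
  by move=> ?; rewrite lnV ?posrE.
have ip u : 0 < u -> 0 < u^-1 by move=> ?; rewrite invr_gt0.
rewrite lnM' ?mulr_gt0 ?ip // !lnM' ?ip // !lnV' //.
lra.
Qed.
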